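(* Let $k_1,k_2,k_3$ be positive integers and let $D$ be a Hamiltonian digraph containing no subdivision of $B(k_1,k_2;k_3)$ as a subdigraph. Then $\chi(D)\le 4k$, where $k=\max\{k_1,k_2,k_3\}$.
   Context: Digraphs are orientations of finite simple graphs (no loops, no multiple arcs, no pair of opposite arcs). $\chi(D)$ is the chromatic number of the underlying undirected graph. A digraph is Hamiltonian if it contains a directed cycle through all its vertices. The $(2+1)$-bispindle $B(k_1,k_2;k_3)$ is the union of two directed $xy$-paths of lengths $k_1$ and $k_2$ and one directed $yx$-path of length $k_3$, these three paths being pairwise internally disjoint. A subdivision of a digraph $H$ is obtained by replacing each arc $(u,v)$ by a directed $uv$-path of length at least $1$, these paths being internally disjoint. *)

(* Defs.v *)
From mathcomp Require Import all_boot.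
Set Implicit Arguments. Unset Strict Implicit. Unset Printing Implicit Defensive.

(* A digraph on a finite vertex type V is given by its arc relation A : rel V.
   It is an orientation of a finite simple graph iff it has no loops and no
   pair of opposite arcs (multiple arcs are excluded by A being a relation). *)
Definition oriented_graph (V : finType) (A : rel V) : Prop :=
  forall x y : V, A x y -> ~~ A y x.

(* Proper colouring of the underlying undirected graph with n colours;
   chi(D) <= n  iff  colorable A n. *)
Definition colorable (V : finType) (A : rel V) (n : nat) : Prop :=
  exists c : V -> 'I_n, forall x y : V, A x y -> c x != c y.

Definition hamiltonian (V : finType) (A : rel V) : Prop :=
  exists s : seq V, [/\ uniq s, cycle A s & forall v : V, v \in s].

(* A directed xy-path with internal vertex sequence p: x, p_1, ..., p_m, y,
   all distinct, consecutive vertices joined by arcs.  Its length is size p + 1. *)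
Definition dipath (V : finType) (A : rel V) (x y : V) (p : seq V) : bool :=
  path A x (rcons p y) && uniq (x :: rcons p y).

(* D contains a subdivision of B(k1,k2;k3) as a subdigraph: there are distinct
   x, y, two distinct directed xy-paths of lengths >= k1 and >= k2 and a
   directed yx-path of length >= k3, pairwise internally disjoint. *)
Definition has_bispindle_subdivision (V : finType) (A : rel V)
    (k1 k2 k3 : nat) : Prop :=
  exists (x y : V) (p1 p2 p3 : seq V),
    [/\ x != y,
        [/\ dipath A x y p1, dipath A x y p2 & dipath A y x p3],
        p1 != p2,
        [/\ [disjoint p1 & p2], [disjoint p1 & p3] & [disjoint p2 & p3]] &
        [/\ k1 <= (size p1).+1, k2 <= (size p2).+1 & k3 <= (size p3).+1]].

(* Main.v *)
Require Import Defs.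
From mathcomp Require Import all_boot zify.
Set Implicit Arguments. Unset Strict Implicit. Unset Printing Implicit Defensive.


Section Core.
Variable V : finType.
Variable A : rel V.

Lemma seg_path (f : nat -> V) i len :
  (forall m, m < i + len -> A (f m) (f m.+1)) ->
  path A (f i) (map f (iota i.+1 len)).
Proof.
elim: len i => [|len IH] i Hs //=.
rewrite Hs ?addnS ?ltnS ?leq_addr //=.
apply: IH => m Hm; apply: Hs; lia.
Qed.

Lemma seg_last (f : nat -> V) i len :
  last (f i) (map f (iota i.+1 len)) = f (i + len).
Proof.
elim: len i => [|len IH] i /=; first by rewrite addn0.
by rewrite IH addSnnS.
Qed.

Lemma iota_rcons a b : rcons (iota a b) (a + b) = iota a b.+1.
Proof. by rewrite -cats1 -addn1 iotaD. Qed.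

Lemma core (f : nat -> V) n k1 k2 k3 :
  (forall i j, i < n -> j < n -> f i = f j -> i = j) ->
  (forall i, i.+1 < n -> A (f i) (f i.+1)) -> A (f n.-1) (f 0) ->
  forall i2 j1 j2, 0 < i2 -> i2 < j1 -> j1 < j2 -> j2 < n ->
  A (f 0) (f j1) -> A (f i2) (f j2) ->
  k1 <= j2 - j1 + 1 -> k2 <= i2 + 1 -> k3 <= n - j2 ->
  has_bispindle_subdivision A k1 k2 k3.
Proof.
move=> finj fstep fwrap i2 j1 j2 h1 h2 h3 h4 a1 a2 l1 l2 l3.
have finj' : {in [pred i | i < n] &, injective f}.
  by move=> i j /= Hi Hj; apply: finj.
have mf : forall i X, i < n -> all [pred j | j < n] X ->
   (f i \in map f X) = (i \in X).
  move=> i X Hi HX; apply/mapP/idP => [[j Hj /finj ->]|]; rewrite //.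
  - by have /allP /(_ j Hj) := HX.
  - by move=> HiX; exists i.
have un : forall X, all [pred j | j < n] X -> uniq (map f X) = uniq X.
  move=> X HX; apply: map_inj_in_uniq => i j Hi Hj; apply: finj.
  - by have /allP /(_ i Hi) := HX.
  - by have /allP /(_ j Hj) := HX.
have dis : forall X Y, all [pred j | j < n] X -> all [pred j | j < n] Y ->
   (forall i, i \in X -> i \notin Y) -> [disjoint map f X & map f Y].
  move=> X Y HX HY HXY; rewrite disjoint_has; apply/hasPn => x /mapP [j Hj ->].
  rewrite /= mf ?HXY //. by have /allP /(_ j Hj) := HX.
set p1 := map f (iota j1 (j2 - j1)).
set p2 := map f (iota 1 i2).
set p3 := map f (iota j2.+1 (n - j2.+1)).
have allI : forall a b, a + b <= n -> all [pred j | j < n] (iota a b).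
  move=> a b Hab; apply/allP => j; rewrite mem_iota /=; lia.
have d12 : [disjoint p1 & p2].
  apply: dis; try apply: allI; try lia.
  move=> i; rewrite !mem_iota; lia.
have d13 : [disjoint p1 & p3].
  apply: dis; try apply: allI; try lia.
  move=> i; rewrite !mem_iota; lia.
have d23 : [disjoint p2 & p3].
  apply: dis; try apply: allI; try lia.
  move=> i; rewrite !mem_iota; lia.
have stp : forall m, m.+1 < n -> A (f m) (f m.+1) := fstep.
exists (f 0), (f j2), p1, p2, p3; split.
- apply/negP => /eqP /finj; lia.
- split.
  + rewrite /dipath.
    have -> : rcons p1 (f j2) = f j1 :: map f (iota j1.+1 (j2 - j1)).
      rewrite /p1 -map_rcons.
      have E : j2 = j1 + (j2 - j1) by lia.
      rewrite [in X in rcons _ X]E.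
      by rewrite iota_rcons.
    apply/andP; split.
      rewrite /= a1 /=; apply: seg_path => m Hm; apply: stp; lia.
    have -> : [:: f 0, f j1 & map f (iota j1.+1 (j2 - j1))] =
              map f [:: 0, j1 & iota j1.+1 (j2 - j1)] by [].
    rewrite un /=; last by rewrite (allI _ _) ?andbT; lia.
    rewrite !inE !mem_iota iota_uniq /=; lia.
  + rewrite /dipath; apply/andP; split.
      rewrite rcons_path seg_last seg_path ?add0n ?a2 //.
      by move=> m Hm; apply: stp; lia.
    have -> : f 0 :: rcons p2 (f j2) = map f (0 :: rcons (iota 1 i2) j2) by rewrite /p2 /= map_rcons.
    rewrite un /=; last by rewrite all_rcons (allI _ _) /= ?andbT; lia.
    rewrite mem_rcons rcons_uniq !inE !mem_iota iota_uniq /=; lia.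
  + rewrite /dipath; apply/andP; split.
      rewrite rcons_path seg_last seg_path; last by move=> m Hm; apply: stp; lia.
      have -> : j2 + (n - j2.+1) = n.-1 by lia.
      by rewrite fwrap.
    have -> : f j2 :: rcons p3 (f 0) = map f (j2 :: rcons (iota j2.+1 (n - j2.+1)) 0) by rewrite /p3 /= map_rcons.
    rewrite un /=; last by rewrite all_rcons (allI _ _) /= ?andbT; lia.
    rewrite mem_rcons rcons_uniq !inE !mem_iota iota_uniq /=; lia.
- apply/eqP => E.
  have H1 : f 1 \in p2.
    rewrite /p2 mf; first by rewrite mem_iota; lia.
    - lia.
    - apply: allI; lia.
  move: d12; rewrite E disjoint_has => /hasPn /(_ _ H1).
  by rewrite /= H1.
- exact: (And3 d12 d13 d23).
- rewrite /p1 /p2 /p3 !size_map !size_iota; split; lia.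
Qed.
End Core.


Lemma card_inj_le (T : finType) (S : {set T}) (f : T -> nat) t :
  {in S &, injective f} -> (forall x, x \in S -> f x < t) -> #|S| <= t.
Proof.
move=> finj fb; rewrite cardE -(size_map f) -(size_iota 0 t).
apply: uniq_leq_size.
- by rewrite map_inj_in_uniq ?enum_uniq // => x y; rewrite !mem_enum; apply: finj.
- by move=> y /mapP [x]; rewrite mem_enum => /fb h ->; rewrite mem_iota.
Qed.

Section Cyc.
Variable V : finType.
Variable A : rel V.
Variable s : seq V.
Hypothesis Hu : uniq s.
Hypothesis Hc : cycle A s.
Hypothesis Hall : forall v, v \in s.

Local Notation n := (size s).
Definition pos (v : V) := index v s.
Definition off (a b : V) :=
  if pos a <= pos b then pos b - pos a else n + pos b - pos a.

Lemma pos_lt v : pos v < n.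
Proof. by rewrite /pos index_mem. Qed.

Lemma pos_inj a b : pos a = pos b -> a = b.
Proof.
move=> E; rewrite -(nth_index a (Hall a)) -(nth_index a (Hall b)).
by rewrite -/(pos a) -/(pos b) E.
Qed.

Lemma off_lt a b : off a b < n.
Proof. have := pos_lt a; have := pos_lt b; rewrite /off; case: ifP; lia. Qed.

Lemma off_self a : off a a = 0.
Proof. by rewrite /off leqnn subnn. Qed.

Lemma off_inj z a b : off z a = off z b -> a = b.
Proof.
move=> E; apply: pos_inj; move: E.
have := pos_lt a; have := pos_lt b; have := pos_lt z; rewrite /off.
repeat case: ifP; lia.
Qed.

Lemma offrel z a b : off a b =
  if off z a <= off z b then off z b - off z a else n + off z b - off z a.
Proof.
have := pos_lt a; have := pos_lt b; have := pos_lt z; rewrite /off.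
repeat case: ifP; lia.
Qed.

Lemma offL z a b : off z a <= off z b -> off a b = off z b - off z a.
Proof. by move=> h; rewrite (offrel z) h. Qed.

Lemma offG z a b : off z b < off z a -> off a b = n + off z b - off z a.
Proof. by move=> h; rewrite (offrel z) leqNgt h. Qed.

Lemma off_eq0 a b : off a b = 0 -> a = b.
Proof. by rewrite -(off_self a) => /off_inj. Qed.

Definition fz (z : V) (i : nat) := nth z s ((pos z + i) %% n).

Lemma fz_off z x : fz z (off z x) = x.
Proof.
rewrite /fz.
have -> : (pos z + off z x) %% n = pos x.
  have := pos_lt x; have := pos_lt z; rewrite /off; case: ifP => h1 h2 h3.
  - by rewrite subnKC // modn_small.
  - have -> : pos z + (n + pos x - pos z) = pos x + n by lia.
    by rewrite modnDr modn_small.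
by rewrite nth_index.
Qed.

Lemma fz0 z : fz z 0 = z.
Proof. by rewrite -{1}(off_self z) fz_off. Qed.

Lemma fz_inj z i j : i < n -> j < n -> fz z i = fz z j -> i = j.
Proof.
move=> hi hj /eqP; rewrite /fz nth_uniq ?ltn_mod ?(leq_ltn_trans _ (pos_lt z)) //.
have := pos_lt z => hz /eqP E.
have : (pos z + i) %% n == (pos z + j) %% n by rewrite E.
rewrite eqn_modDl => /eqP; rewrite !modn_small //.
Qed.

Lemma cyc_step z j : j < n -> A (nth z s j) (nth z s (j.+1 %% n)).
Proof.
move=> hj.
have hx : nth z s j \in s by rewrite mem_nth.
have := next_cycle Hc hx; rewrite next_nth hx.
rewrite index_uniq //.
move: hj; case: s => [|y p] //= hj.
case: (ltnP j (size p)) => h.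
- rewrite (modn_small (_ : j.+1 < (size p).+1)) //=.
  by rewrite [nth y p j](set_nth_default z y h).
- have e : j = size p by lia.
  by rewrite e modnn /= [nth y p _]nth_default.
Qed.

Lemma fz_step z i : i.+1 < n -> A (fz z i) (fz z i.+1).
Proof.
move=> h; rewrite /fz.
have -> : (pos z + i.+1) %% n = ((pos z + i) %% n).+1 %% n.
  by rewrite -[(_ %% n).+1]addn1 modnDml addn1 addnS.
apply: cyc_step; rewrite ltn_mod; have := pos_lt z; lia.
Qed.

Lemma fz_wrap z : A (fz z n.-1) (fz z 0).
Proof.
have hz := pos_lt z.
rewrite /fz.
have -> : (pos z + 0) %% n = ((pos z + n.-1) %% n).+1 %% n.
  rewrite -[(_ %% n).+1]addn1 modnDml addn0.
  have -> : pos z + n.-1 + 1 = pos z + n by lia.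
  by rewrite modnDr.
apply: cyc_step; rewrite ltn_mod; lia.
Qed.

Variables k1 k2 k3 : nat.

Lemma cross_dir T1 T2 H1 H2 : A T1 H1 -> A T2 H2 ->
  0 < off T1 T2 -> off T1 T2 < off T1 H1 -> off T1 H1 < off T1 H2 ->
  k1 <= off T1 H2 - off T1 H1 + 1 -> k2 <= off T1 T2 + 1 ->
  k3 <= n - off T1 H2 -> has_bispindle_subdivision A k1 k2 k3.
Proof.
move=> a1 a2 h1 h2 h3 l1 l2 l3.
apply: (@core _ _ (fz T1) n k1 k2 k3 _ _ _ (off T1 T2) (off T1 H1) (off T1 H2)) => //.
- exact: fz_inj.
- exact: fz_step.
- exact: fz_wrap.
- exact: off_lt.
- by rewrite fz0 fz_off.
- by rewrite !fz_off.
Qed.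

Definition adj a b := A a b || A b a.

Lemma cross k a b c d : 0 < k -> k1 <= k -> k2 <= k -> k3 <= k ->
  adj a b -> adj c d -> k <= off a c -> off a c + k <= off a b ->
  off a b + k <= off a d -> off a d + k <= n ->
  has_bispindle_subdivision A k1 k2 k3.
Proof.
move=> k0 l1 l2 l3 ab cd h1 h2 h3 h4.
have oa := off_self a.
have Gx : forall x y, off a y < off a x -> off x y = n + off a y - off a x.
  by move=> x y; apply: offG.
have Lx : forall x y, off a x <= off a y -> off x y = off a y - off a x.
  by move=> x y; apply: offL.
case/orP: ab => ab; case/orP: cd => cd.
- apply: (cross_dir ab cd); lia.
- apply: (cross_dir cd ab); rewrite ?(Gx d a) ?(Gx d c) ?(Gx d b); lia.
- apply: (cross_dir cd ab); rewrite ?(Lx c b) ?(Lx c d) ?(Gx c a); lia.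
- apply: (cross_dir ab cd); rewrite ?(Lx b d) ?(Gx b a) ?(Gx b c); lia.
Qed.

Variable H : {set V}.

Definition cH a b := \sum_(y in H) (0 < off a y < off a b : nat).

Lemma pw a b x y : 0 < off a x -> off a x < off a b ->
  (0 < off a y < off a b : nat) =
  (0 < off a y < off a x : nat) + (y == x) + (0 < off x y < off x b : nat).
Proof.
move=> h1 h2.
have -> : (y == x) = (off a y == off a x).
  by apply/eqP/eqP => [->|/off_inj].
rewrite (offrel a x y) (offL (ltnW h2)).
have := off_lt a y; have := off_lt a b.
case: ifP; lia.
Qed.

Lemma sum_eqx x : \sum_(y in H) (y == x : nat) = (x \in H).
Proof.
case: (boolP (x \in H)) => hx.
- rewrite (bigD1 x) //= eqxx big1 // => y /andP [_ /negbTE ->] //.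
- by rewrite big1 // => y hy; case: eqP => // E; move: hx; rewrite -E hy.
Qed.

Lemma F1 a b x : 0 < off a x -> off a x < off a b ->
  cH a b = cH a x + (x \in H) + cH x b.
Proof.
move=> h1 h2; rewrite /cH (eq_bigr _ (fun y _ => pw y h1 h2)) !big_split /=.
by rewrite sum_eqx.
Qed.

Lemma sum_card (P : pred V) : \sum_(y in H) (P y : nat) = #|[set y in H | P y]|.
Proof.
rewrite -sum1_card [LHS]big_mkcond [RHS]big_mkcond /=.
by apply: eq_bigr => y _; rewrite !inE; case: (y \in H); case: (P y).
Qed.


Lemma cH_off a b : cH a b <= (off a b).-1.
Proof.
rewrite /cH sum_card.
apply: (@card_inj_le _ _ (fun y => (off a y).-1)).
- move=> x y; rewrite !inE => /andP [_ /andP [hx _]] /andP [_ /andP [hy _]] E.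
  apply: (@off_inj a); lia.
- move=> x; rewrite !inE => /andP [_ /andP [hx hy]]; lia.
Qed.

Hypothesis Hor : oriented_graph A.

Lemma adj_neq u w : adj u w -> w != u.
Proof.
apply: contraTneq => ->; rewrite /adj orbb; apply/negP => h.
by have := Hor h; rewrite h.
Qed.

Lemma cnt1 u t : #|[set w in H | (w != u) && (cH u w <= t)]| <= t.+1.
Proof.
apply: (@card_inj_le _ _ (cH u)); last by move=> x; rewrite !inE => /andP [_ /andP [_ h]].
have key : forall x y, x \in H -> x != u -> y != u -> off u x < off u y -> cH u x < cH u y.
  move=> x y xH hx hy h; rewrite (F1 _ h); last first.
    by rewrite lt0n; apply/eqP => /off_eq0 E; move: hx; rewrite E eqxx.
  lia.
move=> x y; rewrite !inE => /andP [xH /andP [hx _]] /andP [yH /andP [hy _]] E.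
apply: (@off_inj u).
case: (ltngtP (off u x) (off u y)) => // h.
- by have := key x y xH hx hy h; lia.
- by have := key y x yH hy hx h; lia.
Qed.

Lemma cnt2 u t : #|[set w in H | (w != u) && (cH w u <= t)]| <= t.+1.
Proof.
apply: (@card_inj_le _ _ (cH^~ u)); last by move=> x; rewrite !inE => /andP [_ /andP [_ h]].
have key : forall x y, y \in H -> x != u -> y != u -> off u x < off u y -> cH y u < cH x u.
  move=> x y yH hx hy h.
  have ou := off_self u.
  have hx0 : 0 < off u x.
    by rewrite lt0n; apply/eqP => /off_eq0 E; move: hx; rewrite E eqxx.
  have e1 : off x y = off u y - off u x by apply: offL; lia.
  have e2 : off x u = n + off u u - off u x by apply: offG; lia.
  have hly := off_lt u y.
  by rewrite (@F1 x u y) ?e1 ?e2; lia.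
move=> x y; rewrite !inE => /andP [xH /andP [hx _]] /andP [yH /andP [hy _]] E.
apply: (@off_inj u).
case: (ltngtP (off u x) (off u y)) => // h.
- by have := key x y yH hx hy h; lia.
- by have := key y x xH hy hx h; lia.
Qed.

Lemma offL' z a b : off z a <= off z b -> off a b + off z a = off z b.
Proof. by move=> h; rewrite (offL h) subnK. Qed.

Lemma offG' z a b : off z b < off z a -> off a b + off z a = n + off z b.
Proof. by move=> h; rewrite (offG h) subnK //; have := off_lt z a; lia. Qed.

Lemma cH_lt a b : 0 < off a b -> cH a b < off a b.
Proof. by move=> h; have := cH_off a b; case: (off a b) h => // m _; rewrite ltnS. Qed.

Definition nb u := [set w in H | adj u w].

Lemma deg_le u t :
  (forall w, w \in H -> adj u w -> (cH u w <= t) || (cH w u <= t)) ->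
  #|nb u| <= t.+1 * 2.
Proof.
move=> hyp.
have sub : nb u \subset [set w in H | (w != u) && (cH u w <= t)] :|:
                         [set w in H | (w != u) && (cH w u <= t)].
  apply/subsetP => w; rewrite !inE => /andP [wH auw].
  by rewrite wH (adj_neq auw) /=; apply: hyp.
have := subset_leq_card sub; rewrite cardsU.
have := cnt1 u t; have := cnt2 u t; lia.
Qed.

Definition VL t p q := [&& p \in H, q \in H, adj p q, t <= cH p q & t <= cH q p].

Lemma F1H a b x : x \in H -> 0 < off a x -> off a x < off a b ->
  cH a b = cH a x + 1 + cH x b.
Proof. by move=> xH h1 h2; rewrite (F1 h1 h2) xH. Qed.

Lemma degen_core k L p q u :
  (forall a b c d, adj a b -> adj c d -> k.+1 <= off a c -> off a c + k.+1 <= off a b ->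
     off a b + k.+1 <= off a d -> off a d + k.+1 <= n -> False) ->
  adj p q -> p \in H -> q \in H -> u \in H -> (2*k).+1 <= L -> cH p q = L ->
  (forall a b, VL (2*k).+1 a b -> L <= cH a b) ->
  0 < off p u -> off p u < off p q -> cH p u = k ->
  #|nb u| <= (2*k).+1 * 2.
Proof.
move=> NC apq pH qH uH L1 EL Lmin pu0 puq cpu.
apply: deg_le => w wH auw.
apply/negPn/negP => /norP []; rewrite -!ltnNge => c1 c2.
have auw' : adj w u by rewrite /adj orbC.
have Luw : L <= cH u w by apply: Lmin; rewrite /VL uH wH auw /= c1 c2.
have Lwu : L <= cH w u by apply: Lmin; rewrite /VL uH wH auw' /= c1 c2.
have wu := adj_neq auw.
have NC' := NC p q u w apq auw.
have hwu : off p w != off p u by apply: contra wu => /eqP /off_inj ->.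
have Fw := F1H wH; have Fp := F1H pH; have Fq := F1H qH; have Fu := F1H uH.
clear NC Lmin apq auw auw' wu pH qH uH wH.
have cuq : cH u q + k.+1 = L.
  by have := Fu _ _ pu0 puq; rewrite EL cpu; lia.
have op := off_self p.
have olw := off_lt p w.
have olq := off_lt p q.
case: (posnP (off p w)) => [ow0 | ow_pos].
  have wp : p = w by apply: (@off_inj p); rewrite ow0 op.
  by move: Lwu; rewrite -wp cpu; lia.
case: (ltngtP (off p w) (off p u)) => h.
- by have := Fw _ _ ow_pos h; rewrite cpu; lia.
- have e1 : off u w + off p u = off p w by apply: offL'; lia.
  have e2 : off u q + off p u = off p q by apply: offL'; lia.
  case: (ltngtP (off p w) (off p q)) => h'.
  + have p1 : 0 < off u w by lia.
    have p2 : off u w < off u q by lia.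
    by have := Fw _ _ p1 p2; lia.
  + have e3 : off q w + off p q = off p w by apply: offL'; lia.
    have e4 : off w p + off p w = n + off p p by apply: offG'; lia.
    have e5 : off w u + off p w = n + off p u by apply: offG'; lia.
    rewrite op in e4.
    case: (leqP k (cH q w)) => hqw; case: (leqP k (cH w p)) => hwp.
    * have b1 := cH_lt pu0.
      have b2 : cH u q < off u q by apply: cH_lt; lia.
      have b3 : cH q w < off q w by apply: cH_lt; lia.
      have b4 : cH w p < off w p by apply: cH_lt; lia.
      by apply: NC'; lia.
    * have p1 : 0 < off w p by lia.
      have p2 : off w p < off w u by lia.
      by have := Fp _ _ p1 p2; rewrite cpu; lia.
    * have p1 : 0 < off u q by lia.
      have p2 : off u q < off u w by lia.
      by have := Fq _ _ p1 p2; lia.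
    * have p1 : 0 < off u q by lia.
      have p2 : off u q < off u w by lia.
      by have := Fq _ _ p1 p2; lia.
  + have wq : q = w by apply: (@off_inj p); rewrite h'.
    by move: Luw; rewrite -wq; lia.
- by move: hwu; rewrite h eqxx.
Qed.

Lemma cH_mono a x y : x \in H -> 0 < off a x -> off a x < off a y -> cH a x < cH a y.
Proof. by move=> xH h1 h2; rewrite (F1H xH h1 h2) addn1 ltnS leq_addr. Qed.

Lemma degen k : 0 < k -> k1 <= k -> k2 <= k -> k3 <= k ->
  ~ has_bispindle_subdivision A k1 k2 k3 ->
  forall u0, u0 \in H -> exists2 u, u \in H & #|nb u| <= 4*k-2.
Proof.
move=> k0 l1 l2 l3 NB u0 u0H.
case: k k0 l1 l2 l3 => // k _ l1 l2 l3.
have -> : 4 * k.+1 - 2 = (2*k).+1 * 2 by lia.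
have NC : forall a b c d, adj a b -> adj c d -> k.+1 <= off a c ->
    off a c + k.+1 <= off a b -> off a b + k.+1 <= off a d -> off a d + k.+1 <= n -> False.
  move=> a b c d h1 h2 h3 h4 h5 h6; apply: NB.
  exact: (@cross k.+1 a b c d isT l1 l2 l3 h1 h2 h3 h4 h5 h6).
case: (boolP [exists pq : V * V, VL (2*k).+1 pq.1 pq.2]) =>
   [/existsP [[p0 q0] /= VL0] | /existsPn noVL]; last first.
  exists u0 => //; apply: deg_le => w wH auw.
  by have := noVL (u0, w); rewrite /VL /= u0H wH auw /= negb_and -!leqNgt.
have exL : exists L, [exists pq : V * V, VL (2*k).+1 pq.1 pq.2 && (cH pq.1 pq.2 == L)].
  by exists (cH p0 q0); apply/existsP; exists (p0, q0); rewrite /= VL0 eqxx.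
case: (ex_minnP exL) => L /existsP [[p q] /= /andP [VLpq /eqP EL]] Lmin.
have Lmin' : forall a b, VL (2*k).+1 a b -> L <= cH a b.
  by move=> a b hab; apply: Lmin; apply/existsP; exists (a, b); rewrite /= hab eqxx.
move: VLpq; rewrite /VL => /and5P [pH qH apq L1 _].
rewrite EL in L1.
set S := [set x in H | 0 < off p x < off p q].
have cardS : #|S| = L by rewrite -EL /cH sum_card.
have injS : {in S &, injective (cH p)}.
  move=> x y; rewrite !inE => /andP [xH /andP [hx _]] /andP [yH /andP [hy _]] E.
  apply: (@off_inj p).
  case: (ltngtP (off p x) (off p y)) => // h.
  - by have := cH_mono xH hx h; rewrite E ltnn.
  - by have := cH_mono yH hy h; rewrite E ltnn.
have bndS : forall x, x \in S -> cH p x < L.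
  move=> x; rewrite !inE => /andP [xH /andP [h1 h2]].
  by rewrite -EL; apply: cH_mono.
have kL : k < L by apply: leq_trans L1; rewrite ltnS mul2n -addnn leq_addr.
have [u] : exists2 u, u \in S & cH p u = k.
  have U : uniq (map (cH p) (enum S)).
    by rewrite map_inj_in_uniq ?enum_uniq // => x y; rewrite !mem_enum; apply: injS.
  have Sub : {subset map (cH p) (enum S) <= iota 0 L}.
    by move=> y /mapP [x]; rewrite mem_enum => /bndS h ->; rewrite mem_iota add0n leq0n.
  have szE : size (iota 0 L) <= size (map (cH p) (enum S)).
    by rewrite size_map -cardE cardS size_iota.
  have [_ Eq] := uniq_min_size U Sub szE.
  have : k \in iota 0 L by rewrite mem_iota add0n leq0n.
  by rewrite -Eq => /mapP [x]; rewrite mem_enum => xS ->; exists x.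
rewrite !inE => /andP [uH /andP [pu0 puq]] cpu.
exists u => //.
exact: (degen_core NC apq pH qH uH L1 EL Lmin' pu0 puq cpu).
Qed.

End Cyc.

Lemma greedy (V : finType) (A : rel V) N D : D < N -> (forall x, ~~ A x x) ->
  (forall H : {set V}, forall u0, u0 \in H ->
     exists2 u, u \in H & #|[set w in H | A u w || A w u]| <= D) ->
  forall H : {set V}, exists c : V -> 'I_N,
     forall x y, x \in H -> y \in H -> A x y -> c x != c y.
Proof.
move=> DN irr hdeg H.
move: {2}#|H| (leqnn #|H|) => m; elim: m H => [|m IH] H hm.
  exists (fun _ => Ordinal (leq_ltn_trans (leq0n D) DN)) => x y xH.
  by move: hm; rewrite (cardD1 x) xH.
case: (set_0Vmem H) => [-> | [u0 u0H]].
  by apply: IH; rewrite cards0.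
have [u uH du] := hdeg H u0 u0H.
have [c Hc] : exists c : V -> 'I_N, forall x y, x \in H :\ u -> y \in H :\ u -> A x y -> c x != c y.
  by apply: IH; move: hm; rewrite (cardsD1 u H) uH add1n ltnS.
set I := [set c w | w in [set w in H | A u w || A w u]].
have [col colI] : exists col, col \notin I.
  case: (pickP (fun col => col \notin I)) => [col hcol | none]; first by exists col.
  have : #|[set: 'I_N]| <= #|I|.
    by apply: subset_leq_card; apply/subsetP => col _; move: (none col) => /negbFE.
  rewrite cardsT card_ord => hN.
  have := leq_imset_card c [set w in H | A u w || A w u].
  rewrite -/I; move: du hN DN; clear; lia.
exists (fun x => if x == u then col else c x) => x y xH yH axy.
case: (eqVneq x u) => [exu | nxu]; case: (eqVneq y u) => [eyu | nyu].
- by move: axy; rewrite exu eyu (negbTE (irr u)).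
-   have : c y \in I by apply: imset_f; rewrite inE yH -exu axy.
  by apply: contraTneq => <-.
- have : c x \in I by apply: imset_f; rewrite inE xH -eyu axy orbT.
  by apply: contraTneq => ->.
- by apply: Hc; rewrite // !inE ?nxu ?nyu.
Qed.

Unset Implicit Arguments.

Theorem theorem8 (V : finType) (A : rel V) (k1 k2 k3 : nat) :
  0 < k1 -> 0 < k2 -> 0 < k3 ->
  oriented_graph A ->
  hamiltonian A ->
  ~ has_bispindle_subdivision A k1 k2 k3 ->
  colorable A (4 * maxn k1 (maxn k2 k3)).
Proof.
move=> k1p k2p k3p Hor [s [Hu Hc Hall]] NB.
set k := maxn k1 (maxn k2 k3).
have l1 : k1 <= k by rewrite /k leq_maxl.
have l2 : k2 <= k by rewrite /k (leq_trans (leq_maxl k2 k3)) ?leq_maxr.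
have l3 : k3 <= k by rewrite /k (leq_trans (leq_maxr k2 k3)) ?leq_maxr.
have k0 : 0 < k by apply: leq_trans l1.
have irr : forall x, ~~ A x x.
  by move=> x; apply/negP => h; have := Hor _ _ h; rewrite h.
have DN : 4 * k - 2 < 4 * k by lia.
have [c Hcol] := greedy DN irr (fun H u0 u0H =>
   @degen V A s Hu Hc Hall k1 k2 k3 H Hor k k0 l1 l2 l3 NB u0 u0H) [set: V].
by exists c => x y axy; apply: Hcol; rewrite ?inE.
Qed.
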